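(* Let $\mathcal{D}_{\text{SEQ}}$ be a temporal sequence database with support threshold $\sigma$ and confidence threshold $\delta$. Let $N_{k-1}=(E_1,\dots,E_{k-1})$ be a frequent $(k-1)$-event combination and $E_k$ a frequent single event, and let $N_k=N_{k-1}\cup E_k$. Then $N_k$ can form frequent $k$-event temporal patterns only if for every $E_i\in N_{k-1}$ there exists $r\in\{\text{Follows},\text{Contains},\text{Overlaps}\}$ such that $r(E_i,E_k)$ is a frequent temporal relation.
   Context: A temporal event is $E=(\omega,T)$ (symbol and set of intervals), with instances $(\omega,[t_s,t_e])$. $\mathcal{D}_{\text{SEQ}}$ is a finite collection of temporal sequences (lists of instances ordered by start time). A $k$-event temporal pattern over events $E_1,\dots,E_k$ is a list of the $\tfrac12k(k-1)$ triples $(r_{ij},E_i,E_j)$, $r_{ij}\in\{\text{Follows},\text{Contains},\text{Overlaps}\}$. A sequence supports a pattern iff it has at least two instances and each triple's relation holds between some instances of the two events in it. Supports count sequences: $\textit{supp}$ of an event (group) is the number of sequences containing an instance of each event, $\textit{supp}(P)$ the number of sequences supporting $P$; $\textit{conf}(P)=\textit{supp}(P)/\max_{E_k\in P}\textit{supp}(E_k)$. An event, event combination, relation (viewed as a 2-event pattern $(r,E_i,E_k)$) or pattern is frequent if its support is at least $\sigma$ (and, for combinations/patterns, its confidence is at least $\delta$). *)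

(* Defs.v *)
From mathcomp Require Import all_boot all_order all_algebra.
Set Implicit Arguments. Unset Strict Implicit. Unset Printing Implicit Defensive.
Import Order.TTheory GRing.Theory Num.Theory.

Inductive trel := Follows | Contains | Overlaps.

(* Time points are rationals; an tinterval is a pair (t_s, t_e). *)
Definition tinterval := (rat * rat)%type.

Definition instance (Omega : Type) := (Omega * tinterval)%type.
Definition isym (Omega : Type) (a : instance Omega) : Omega := a.1.
Definition iint (Omega : Type) (a : instance Omega) : tinterval := a.2.

Definition wf_sequence (Omega : Type) (s : seq (instance Omega)) : bool :=
  all (fun a => ((iint a).1 <= (iint a).2)%R) s &&
  sorted (fun a b => ((iint a).1 <= (iint b).1)%R) s.

Definition wf_database (Omega : Type) (D : seq (seq (instance Omega))) : bool :=
  all (@wf_sequence Omega) D.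

Section Mining.
Variable Omega : eqType.
(* [sem r I1 I2] : relation r holds between an instance with tinterval I1
   (first event) and an instance with tinterval I2 (second event). *)
Variable sem : trel -> tinterval -> tinterval -> bool.
Variable D : seq (seq (instance Omega)).

Definition occurs (e : Omega) (s : seq (instance Omega)) : bool :=
  has (fun a => isym a == e) s.

Definition supp_event (e : Omega) : nat := count (occurs e) D.

Definition supp_comb (N : seq Omega) : nat :=
  count (fun s => all (fun e => occurs e s) N) D.

Definition max_supp (N : seq Omega) : nat := \max_(e <- N) supp_event e.

Definition conf_comb (N : seq Omega) : rat := ((supp_comb N)%:R / (max_supp N)%:R)%R.

(* the triples (r_ij, E_i, E_j), i < j, of the k-event pattern over the
   events evs = [E_1; ...; E_k] with relation assignment r *)
Definition triples (evs : seq Omega) (r : nat -> nat -> trel)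
  : seq (trel * Omega * Omega) :=
  let ie := zip (iota 0 (size evs)) evs in
  [seq (r p.1 q.1, p.2, q.2) | p <- ie, q <- [seq q <- ie | p.1 < q.1]].

Definition supports (P : seq (trel * Omega * Omega)) (s : seq (instance Omega)) : bool :=
  (1 < size s) &&
  all (fun t => has (fun a => has (fun b =>
         [&& isym a == t.1.2, isym b == t.2 & sem t.1.1 (iint a) (iint b)]) s) s) P.

Definition supp_pat (P : seq (trel * Omega * Omega)) : nat := count (supports P) D.

Definition conf_pat (evs : seq Omega) (r : nat -> nat -> trel) : rat :=
  ((supp_pat (triples evs r))%:R / (max_supp evs)%:R)%R.

Variables (sigma : nat) (delta : rat).

Definition frequent_event (e : Omega) : Prop := sigma <= supp_event e.

Definition frequent_comb (N : seq Omega) : Prop :=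
  sigma <= supp_comb N /\ (delta <= conf_comb N)%R.

Definition frequent_pattern (evs : seq Omega) (r : nat -> nat -> trel) : Prop :=
  sigma <= supp_pat (triples evs r) /\ (delta <= conf_pat evs r)%R.

Definition frequent_relation (r : trel) (Ei Ek : Omega) : Prop :=
  frequent_pattern [:: Ei; Ek] (fun _ _ => r).
End Mining.

(* Main.v *)
Require Import Defs.
From mathcomp Require Import all_boot all_order all_algebra.
From HB Require Import structures.
Import Order.TTheory GRing.Theory Num.Theory.

Definition trel_eqb (a b : trel) : bool :=
  match a, b with
  | Follows, Follows | Contains, Contains | Overlaps, Overlaps => true
  | _, _ => false end.
Lemma trel_eqP : Equality.axiom trel_eqb.
Proof. by case; case; constructor. Qed.
HB.instance Definition _ := hasDecEq.Build trel trel_eqP.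

Lemma rat_ineq (delta : rat) (a c m B : nat) :
  a <= c -> c <= m -> m <= B ->
  (delta <= a%:R / B%:R)%R -> (delta <= c%:R / m%:R)%R.
Proof.
move=> hac hcm hmB hd.
case: (posnP m) => [m0|mpos].
  have c0 : c = 0 by move: hcm; rewrite m0; case: c {hac}.
  have a0 : a = 0 by move: hac; rewrite c0; case: a {hd}.
  by move: hd; rewrite a0 c0 !mul0r.
apply: (le_trans hd).
have Bpos : (0 < B)%N by apply: leq_trans hmB.
rewrite ler_pdivrMr ?ltr0n // mulrAC ler_pdivlMr ?ltr0n //.
rewrite -!natrM ler_nat; apply: leq_mul => //.
Qed.

Theorem lemma5 (Omega : eqType) (sem : trel -> tinterval -> tinterval -> bool)
  (D : seq (seq (instance Omega))) (sigma : nat) (delta : rat)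
  (N : seq Omega) (Ek : Omega) :
  wf_database D ->
  frequent_comb D sigma delta N ->
  frequent_event D sigma Ek ->
  (exists r : nat -> nat -> trel,
      frequent_pattern sem D sigma delta (rcons N Ek) r) ->
  forall Ei, Ei \in N ->
    exists rr : trel, frequent_relation sem D sigma delta rr Ei Ek.
Proof.
move=> _ _ _ [r [hs hc]] Ei hEi.
set i := index Ei N.
have hi : i < size N by rewrite index_mem.
exists (r i (size N)).
set t := (r i (size N), Ei, Ek).
have memz : forall j, j < (size N).+1 ->
   (j, nth Ek (rcons N Ek) j) \in zip (iota 0 (size (rcons N Ek))) (rcons N Ek).
  move=> j hj.
  have -> : (j, nth Ek (rcons N Ek) j) =
     nth (0, Ek) (zip (iota 0 (size (rcons N Ek))) (rcons N Ek)) j.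
    by rewrite nth_zip ?size_iota // nth_iota // size_rcons.
  by apply: mem_nth; rewrite size_zip size_iota minnn size_rcons.
have ht : t \in triples (rcons N Ek) r.
  rewrite /triples.
  have e1 := memz i (ltnW hi).
  have e2 := memz (size N) (ltnSn _).
  rewrite nth_rcons hi nth_index // in e1.
  rewrite nth_rcons ltnn eqxx in e2.
  have := allpairs_f_dep (fun p q => (r p.1 q.1, p.2, q.2)) e1
     (t := fun p => [seq q <- zip (iota 0 (size (rcons N Ek))) (rcons N Ek) | p.1 < q.1])
     (y := (size N, Ek)).
  by rewrite mem_filter /= hi e2; apply.
have tr : triples [:: Ei; Ek] (fun _ _ => r i (size N)) = [:: t] by [].
have sub1 : subpred (supports sem (triples (rcons N Ek) r)) (supports sem [:: t]).
  move=> s /andP [h1 /allP h2]; rewrite /supports h1 /= andbT.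
  exact: (h2 t ht).
have le1 := sub_count sub1 D.
have sub2 : subpred (supports sem [:: t]) (occurs Ei).
  move=> s /andP [_] /= /andP [/hasP [a ain /hasP [b _ /and3P [ha _ _]]] _].
  by apply/hasP; exists a.
have le2 := sub_count sub2 D.
have hm : max_supp D [:: Ei; Ek] <= max_supp D (rcons N Ek).
  rewrite /max_supp big_cons big_seq1 geq_max.
  rewrite (leq_bigmax_seq (F := supp_event D) Ei) ?mem_rcons ?in_cons ?hEi ?orbT //.
  by rewrite (leq_bigmax_seq (F := supp_event D) Ek) ?mem_rcons ?in_cons ?eqxx.
have hEim : supp_event D Ei <= max_supp D [:: Ei; Ek].
  by rewrite /max_supp big_cons leq_maxl.
rewrite /frequent_relation /frequent_pattern; split; rewrite ?tr.
  exact: leq_trans hs le1.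
move: hc; rewrite /conf_pat tr.
apply: rat_ineq => //.
exact: leq_trans le2 hEim.
Qed.
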